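(* Let $G=(V,E)$ be a graph with no isolated vertices and $m\ge1$ edges. Then the linear programs $\mathrm{LP}_{\mathrm{complete}}$ and $\mathrm{LP}_{\mathrm{sparse}}$ (defined in the context) have the same set of optimal solutions; in particular every optimal solution of $\mathrm{LP}_{\mathrm{sparse}}$ is feasible for $\mathrm{LP}_{\mathrm{complete}}$, i.e. is a pseudo-metric on $V$ with values in $[0,1]$, and the two programs have the same optimal objective value.
   Context: $G=(V,E)$ is an undirected simple graph, $V=\{1,\dots,n\}$, $m=|E|$, adjacency matrix $A$, degrees $d_i$, modularity matrix $B_{i,j}=A_{i,j}-\frac{d_id_j}{2m}$. Variables $d_{i,j}$ satisfy $d_{i,j}=d_{j,i}$, $d_{i,i}=0$. $N(i)$ is the neighbor set of $i$ and $N(i,j)=(N(i)\cup N(j))\setminus\{i,j\}$. A pseudo-metric is a function $d$ on $V\times V$ with $d(i,j)\ge0$, $d(i,i)=0$, $d(i,j)=d(j,i)$ and $d(i,j)\le d(i,k)+d(k,j)$. $\mathrm{LP}_{\mathrm{complete}}$: maximize $\frac{1}{2m}\sum_{i,j}B_{i,j}(1-d_{i,j})$ (sum over all ordered pairs) subject to the triangle inequalities $d_{i,j}+d_{j,k}\ge d_{i,k}$, $d_{i,j}+d_{i,k}\ge d_{j,k}$, $d_{j,k}+d_{i,k}\ge d_{i,j}$ for all $i<j<k$, and $d_{i,j}\in[0,1]$ for all $i\ne j$. $\mathrm{LP}_{\mathrm{sparse}}$: maximize $-\frac{1}{2m}\sum_{i,j}B_{i,j}d_{i,j}$ subject to $d_{i,k}+d_{k,j}\ge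 d_{i,j}$ for every pair $i\ne j$ and every $k\in N(i,j)$, and $d_{i,j}\in[0,1]$ for all $i\ne j$. (Since $\sum_{i,j}B_{i,j}=0$, the two objectives coincide on every vector $d$.) *)

(* Defs.v *)
(* Graph on V = 'I_n (vertices 0..n-1 instead of 1..n),
   given by a boolean adjacency relation e (assumed symmetric, irreflexive
   in the theorem). Reals: an arbitrary real field R. *)
From HB Require Import structures.
From mathcomp Require Import all_boot all_order all_algebra.
Set Implicit Arguments. Unset Strict Implicit. Unset Printing Implicit Defensive.
Import Order.TTheory GRing.Theory Num.Theory.
Local Open Scope ring_scope.

Section Defs.
Variable n : nat.
Variable e : rel 'I_n.
Variable R : realFieldType.

Definition deg (i : 'I_n) : nat := #|[set j | e i j]|.
(* number of edges m = (sum of degrees)/2 (handshake lemma) *)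
Definition num_edges : nat := ((\sum_(i < n) deg i)%N)./2.
Definition no_isolated : Prop := forall i : 'I_n, (0 < deg i)%N.

Definition modB (i j : 'I_n) : R :=
  (e i j)%:R - ((deg i)%:R * (deg j)%:R) / (2 * (num_edges)%:R).

Definition lp_var (d : 'I_n -> 'I_n -> R) : Prop :=
  (forall i j, d i j = d j i) /\ (forall i, d i i = 0).

Definition unit_bounds (d : 'I_n -> 'I_n -> R) : Prop :=
  forall i j, i != j -> 0 <= d i j <= 1.

Definition obj_complete (d : 'I_n -> 'I_n -> R) : R :=
  (2 * (num_edges)%:R)^-1 * \sum_(i < n) \sum_(j < n) modB i j * (1 - d i j).

Definition obj_sparse (d : 'I_n -> 'I_n -> R) : R :=
  - ((2 * (num_edges)%:R)^-1 * \sum_(i < n) \sum_(j < n) modB i j * d i j).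

Definition feasible_complete (d : 'I_n -> 'I_n -> R) : Prop :=
  lp_var d /\ unit_bounds d /\
  (forall i j k : 'I_n, (i < j)%N -> (j < k)%N ->
     [/\ d i j + d j k >= d i k, d i j + d i k >= d j k & d j k + d i k >= d i j]).

Definition nbr2 (i j : 'I_n) : {set 'I_n} :=
  ([set k | e i k] :|: [set k | e j k]) :\: [set i; j].

Definition feasible_sparse (d : 'I_n -> 'I_n -> R) : Prop :=
  lp_var d /\ unit_bounds d /\
  (forall i j : 'I_n, i != j -> forall k, k \in nbr2 i j -> d i k + d k j >= d i j).

Definition optimal_complete (d : 'I_n -> 'I_n -> R) : Prop :=
  feasible_complete d /\
  forall d', feasible_complete d' -> obj_complete d' <= obj_complete d.

Definition optimal_sparse (d : 'I_n -> 'I_n -> R) : Prop :=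
  feasible_sparse d /\
  forall d', feasible_sparse d' -> obj_sparse d' <= obj_sparse d.

Definition pseudo_metric (d : 'I_n -> 'I_n -> R) : Prop :=
  (forall i j, 0 <= d i j) /\ (forall i, d i i = 0) /\
  (forall i j, d i j = d j i) /\ (forall i j k, d i j <= d i k + d k j).

End Defs.

(* Main.v *)
Require Import Defs.
From HB Require Import structures.
From mathcomp Require Import all_boot all_order all_algebra.
From mathcomp Require Import lra zify.
From Stdlib Require Import FunctionalExtensionality.
Import Order.TTheory GRing.Theory Num.Theory.
Local Open Scope ring_scope.

Section Closure.
Variables (R : realFieldType) (n : nat) (e : rel 'I_n) (d : 'I_n -> 'I_n -> R).
Hypothesis e_sym : symmetric e.
Hypothesis d_sym : forall i j, d i j = d j i.
Hypothesis d0 : forall i, d i i = 0.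
Hypothesis dge0 : forall i j, 0 <= d i j.
Hypothesis dle1 : forall i j, d i j <= 1.
Hypothesis dtri : forall i j : 'I_n, i != j -> forall k, k \in nbr2 e i j -> d i k + d k j >= d i j.

Definition wgt (i j : 'I_n) : R := if i == j then 0 else if e i j then d i j else 1.

Fixpoint fw (s : seq 'I_n) : 'I_n -> 'I_n -> R :=
  match s with
  | [::] => wgt
  | a :: s' => fun i j => Order.min (fw s' i j) (fw s' i a + fw s' a j)
  end.

Fixpoint wt (i : 'I_n) (p : seq 'I_n) (j : 'I_n) : R :=
  match p with [::] => wgt i j | v :: p' => wgt i v + wt v p' j end.

Lemma min_cases (x y : R) : Order.min x y = x \/ Order.min x y = y.
Proof. by case: (leP x y); [left|right]. Qed.

Lemma min_lel (x y : R) : Order.min x y <= x.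
Proof. by rewrite ge_min lexx. Qed.
Lemma min_ler (x y : R) : Order.min x y <= y.
Proof. by rewrite ge_min lexx orbT. Qed.

Lemma wgt_ge0 i j : 0 <= wgt i j.
Proof. rewrite /wgt; case: eqP => // _; case: (e i j) => //. Qed.

Lemma wgt_sym i j : wgt i j = wgt j i.
Proof. by rewrite /wgt eq_sym e_sym d_sym. Qed.

Lemma fw_ge0 s i j : 0 <= fw s i j.
Proof.
elim: s i j => [|a s IH] i j /=; first exact: wgt_ge0.
by rewrite le_min IH addr_ge0.
Qed.

Lemma fw_le_w s i j : fw s i j <= wgt i j.
Proof.
elim: s i j => [|a s IH] i j /=; first exact: lexx.
exact: le_trans (min_lel _ _) (IH _ _).
Qed.

Lemma fw_diag s i : fw s i i = 0.
Proof.
apply/eqP; rewrite eq_le fw_ge0 andbT.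
by have := fw_le_w s i i; rewrite /wgt eqxx.
Qed.

Lemma fw_sym s i j : fw s i j = fw s j i.
Proof.
elim: s i j => [|a s IH] i j /=; first exact: wgt_sym.
by rewrite IH (IH i a) (IH a j) addrC.
Qed.

Lemma fw_tri s : forall a, a \in s -> forall i j, fw s i j <= fw s i a + fw s a j.
Proof.
elim: s => [|k s IH] // b; rewrite in_cons => hb i j /=.
have Fkk := fw_diag s k.
have Hik : Order.min (fw s i k) (fw s i k + fw s k k) = fw s i k.
  by rewrite Fkk addr0 min_l.
have Hkj : Order.min (fw s k j) (fw s k k + fw s k j) = fw s k j.
  by rewrite Fkk add0r min_l.
case/orP: hb => [/eqP-> | hb].
  by rewrite Hik Hkj min_ler.
have T1 := IH b hb i j; have T2 := IH b hb k j; have T3 := IH b hb i k.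
have N1 := fw_ge0 s k b; have N2 := fw_ge0 s b k.
have L1 := min_lel (fw s i j) (fw s i k + fw s k j).
have L2 := min_ler (fw s i j) (fw s i k + fw s k j).
case: (min_cases (fw s i b) (fw s i k + fw s k b)) => ->;
case: (min_cases (fw s b j) (fw s b k + fw s k j)) => ->; lra.
Qed.

Lemma wt_cat i p a q j : wt i (p ++ a :: q) j = wt i p a + wt a q j.
Proof. by elim: p i => [|v p IH] i //=; rewrite IH addrA. Qed.

Lemma fw_walk s i j : exists p, fw s i j = wt i p j.
Proof.
elim: s i j => [|a s IH] i j /=; first by exists [::].
case: (min_cases (fw s i j) (fw s i a + fw s a j)) => ->; first exact: IH.
have [p1 ->] := IH i a; have [p2 ->] := IH a j.
by exists (p1 ++ a :: p2); rewrite wt_cat.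
Qed.

Lemma d_le_wgt_d i v j : d i j <= wgt i v + d v j.
Proof.
rewrite /wgt; case: (eqVneq i v) => [->|hiv]; first by rewrite add0r.
case: (eqVneq i j) => [->|hij]; first by rewrite d0 addr_ge0 //; case: ifP.
case hev: (e i v); last by have := dge0 v j; have := dle1 i j; lra.
case: (eqVneq v j) => [->|hvj]; first by rewrite d0 addr0.
apply: dtri => //; rewrite /nbr2 !inE hev /= negb_or hvj andbT.
by rewrite eq_sym hiv.
Qed.

Lemma d_le_wt p i j : d i j <= wt i p j.
Proof.
elim: p i => [|v p IH] i /=.
  by have := d_le_wgt_d i j j; rewrite d0 addr0.
exact: le_trans (d_le_wgt_d i v j) (lerD (lexx _) (IH v)).
Qed.

Definition clos := fw (enum 'I_n).

Lemma clos_pm : pseudo_metric clos.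
Proof.
split; first by move=> i j; exact: fw_ge0.
split; first by move=> i; exact: fw_diag.
split; first by move=> i j; exact: fw_sym.
by move=> i j k; apply: fw_tri; rewrite mem_enum.
Qed.

Lemma clos_le1 i j : clos i j <= 1.
Proof.
apply: le_trans (fw_le_w _ i j) _; rewrite /wgt.
case: eqP => _ //; case: (e i j) => //.
Qed.

Lemma d_le_clos i j : d i j <= clos i j.
Proof. by rewrite /clos; have [p ->] := fw_walk (enum 'I_n) i j; exact: d_le_wt. Qed.

Lemma clos_edge i j : e i j -> clos i j = d i j.
Proof.
move=> hij; apply/eqP; rewrite eq_le d_le_clos andbT.
apply: le_trans (fw_le_w _ i j) _; rewrite /wgt hij.
by case: eqP => [->|_]; rewrite ?d0.
Qed.

End Closure.

Section Main.
Variables (R : realFieldType) (n : nat) (e : rel 'I_n).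
Hypotheses (e_sym : symmetric e) (e_irr : irreflexive e)
  (hiso : no_isolated e) (hm : (1 <= num_edges e)%N).

Lemma deg_sum i : deg e i = (\sum_j (e i j : nat))%N.
Proof. rewrite /deg -sum1_card big_mkcond /=; apply: eq_bigr => j _.
by rewrite inE; case: (e i j). Qed.

Lemma handshake : (\sum_(i < n) deg e i)%N = (num_edges e).*2.
Proof.
suff H : (\sum_(i < n) deg e i)%N = (\sum_(i < n) \sum_(j < n) (((i < j)%N && e i j) : nat)).*2.
  by rewrite /num_edges H doubleK.
rewrite -addnn.
have -> : (\sum_(i < n) deg e i = \sum_(i < n) \sum_(j < n) (((i < j)%N && e i j) : nat)
    + \sum_(i < n) \sum_(j < n) (((j < i)%N && e i j) : nat))%N.
  rewrite -big_split /=; apply: eq_bigr => i _; rewrite deg_sum -big_split /=.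
  apply: eq_bigr => j _.
  case: (ltngtP i j) => h /=; rewrite ?addn0 ?add0n //.
  have -> : i = j by apply: val_inj.
  by rewrite e_irr.
congr (_ + _)%N; rewrite exchange_big /=; apply: eq_bigr => i _.
by apply: eq_bigr => j _; rewrite e_sym.
Qed.

Let c : R := 2 * (num_edges e)%:R.
Lemma c_gt0 : 0 < c.
Proof. by rewrite /c mulr_gt0 // ltr0n. Qed.

Lemma c_eq : c = \sum_i (deg e i)%:R.
Proof. by rewrite -natr_sum handshake -mul2n natrM. Qed.

Lemma sumB i : \sum_j modB e R i j = 0.
Proof.
rewrite /modB sumrB -natr_sum -deg_sum.
under eq_bigr => j _ do rewrite mulrAC.
rewrite -mulr_sumr -c_eq /c divfK ?subrr //.
have := c_gt0; rewrite lt0r => /andP[]; done.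
Qed.

Lemma obj_eq (d : 'I_n -> 'I_n -> R) : obj_complete e d = obj_sparse e d.
Proof.
rewrite /obj_complete /obj_sparse -mulrN -sumrN; congr (_ * _).
apply: eq_bigr => i _; rewrite -sumrN.
under eq_bigr => j _ do rewrite mulrBr mulr1.
by rewrite sumrB sumB sub0r sumrN.
Qed.

Lemma B_neg i j : ~~ e i j -> modB e R i j < 0.
Proof.
move=> /negbTE h; rewrite /modB h sub0r oppr_lt0 -/c.
by rewrite divr_gt0 ?c_gt0 // mulr_gt0 // ltr0n hiso.
Qed.

Lemma obj_mono (d D : 'I_n -> 'I_n -> R) :
  (forall i j, e i j -> D i j = d i j) -> (forall i j, d i j <= D i j) ->
  obj_sparse e d <= obj_sparse e D /\
  (obj_sparse e D <= obj_sparse e d -> forall i j, ~~ e i j -> D i j = d i j).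
Proof.
move=> hE hle.
have term i j : modB e R i j * D i j <= modB e R i j * d i j.
  case: (boolP (e i j)) => h; first by rewrite hE.
  by apply: ler_wnM2l; [apply/ltW/B_neg | apply: hle].
have hc := c_gt0; have hci : 0 < c^-1 by rewrite invr_gt0.
have Hs : \sum_i \sum_j modB e R i j * D i j <= \sum_i \sum_j modB e R i j * d i j.
  by apply: ler_sum => i _; apply: ler_sum => j _; apply: term.
rewrite /obj_sparse -/c; split.
  by rewrite lerN2; apply: ler_wpM2l => //; exact: ltW.
rewrite lerN2 ler_pM2l // => H2 i j hij.
have Heq : \sum_i \sum_j (modB e R i j * d i j - modB e R i j * D i j) = 0.
  under eq_bigr => k _ do rewrite sumrB.
  rewrite sumrB; apply/eqP; rewrite subr_eq0 eq_le H2 Hs //.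
have hterm : forall i j, 0 <= modB e R i j * d i j - modB e R i j * D i j.
  by move=> i' j'; rewrite subr_ge0 term.
have Hi : \sum_j (modB e R i j * d i j - modB e R i j * D i j) = 0.
  apply: (psumr_eq0P _ Heq) => // i2 _; apply: sumr_ge0 => j2 _; exact: hterm.
have Hij : modB e R i j * d i j - modB e R i j * D i j = 0.
  apply: (psumr_eq0P _ Hi) => // j2 _; exact: hterm.
move: Hij.
move/eqP; rewrite -mulrBr mulf_eq0 (lt_eqF (B_neg i j hij)) /= subr_eq0 => /eqP.
by move=> ->.
Qed.

End Main.

Section Feas.
Variables (R : realFieldType) (n : nat) (e : rel 'I_n).

Lemma fc_pm (d : 'I_n -> 'I_n -> R) : feasible_complete d ->
  pseudo_metric d /\ (forall i j, 0 <= d i j <= 1).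
Proof.
move=> [[ds d0] [ub htri]].
have bnd : forall i j, 0 <= d i j <= 1.
  move=> i j; case: (eqVneq i j) => [->|h]; first by rewrite d0 lexx ler01.
  exact: ub.
split=> //; split; first by move=> i j; case/andP: (bnd i j).
split=> //; split=> // i j k.
have b1 := bnd i j; have b2 := bnd j k; have b3 := bnd i k.
case/andP: b1 => b1 _; case/andP: b2 => b2 _; case/andP: b3 => b3 _.
have s1 := ds i j; have s2 := ds j k; have s3 := ds i k.
case: (eqVneq i j) => [<-|hij]; first by rewrite d0 (ds k i); lra.
case: (eqVneq k i) => [->|hki]; first by rewrite d0; lra.
case: (eqVneq k j) => [->|hkj]; first by rewrite d0; lra.
have nij : (i : nat) <> j by move=> /val_inj /eqP; rewrite (negbTE hij).
have nki : (k : nat) <> i by move=> /val_inj /eqP; rewrite (negbTE hki).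
have nkj : (k : nat) <> j by move=> /val_inj /eqP; rewrite (negbTE hkj).
case: (ltngtP i j) => h1 //; case: (ltngtP j k) => h2 //;
case: (ltngtP i k) => h3 //; try (exfalso; lia).
all: first [ have [t1 t2 t3] := htri i j k ltac:(assumption) ltac:(assumption)
  | have [t1 t2 t3] := htri i k j ltac:(assumption) ltac:(assumption)
  | have [t1 t2 t3] := htri j i k ltac:(assumption) ltac:(assumption)
  | have [t1 t2 t3] := htri j k i ltac:(assumption) ltac:(assumption)
  | have [t1 t2 t3] := htri k i j ltac:(assumption) ltac:(assumption)
  | have [t1 t2 t3] := htri k j i ltac:(assumption) ltac:(assumption) ].
all: rewrite -?s1 -?s2 -?s3 in t1 t2 t3 *; lra.
Qed.

Lemma pm_fc (d : 'I_n -> 'I_n -> R) : pseudo_metric d -> (forall i j, d i j <= 1) ->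
  feasible_complete d.
Proof.
move=> [g0 [d0 [ds tri]]] le1.
split; first by split.
split; first by move=> i j _; rewrite g0 le1.
move=> i j k _ _; split.
- have := tri i k j; lra.
- have := tri j k i; rewrite (ds j i); lra.
- have := tri i j k; rewrite (ds k j); lra.
Qed.

Lemma fc_fs (d : 'I_n -> 'I_n -> R) : feasible_complete d -> feasible_sparse e d.
Proof.
move=> hf; have [[g0 [d0 [ds tri]]] _] := fc_pm d hf.
case: hf => lv [ub _]; split=> //; split=> // i j _ k _; exact: tri.
Qed.

Hypothesis e_sym : symmetric e.

Lemma closure_exists (d : 'I_n -> 'I_n -> R) : feasible_sparse e d ->
  exists D, feasible_complete D /\ (forall i j, e i j -> D i j = d i j) /\
            (forall i j, d i j <= D i j).
Proof.
move=> [[ds d0] [ub dtri]].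
have dge0 : forall i j, 0 <= d i j.
  by move=> i j; case: (eqVneq i j) => [->|h]; [rewrite d0 | case/andP: (ub _ _ h)].
have dle1 : forall i j, d i j <= 1.
  by move=> i j; case: (eqVneq i j) => [->|h]; [rewrite d0 ler01 | case/andP: (ub _ _ h)].
exists (clos R n e d); split; last split.
- apply: pm_fc; first by apply: clos_pm.
  by move=> i j; apply: clos_le1.
- by move=> i j hij; apply: clos_edge.
- by move=> i j; apply: d_le_clos.
Qed.

End Feas.

Theorem theorem2 (R : realFieldType) (n : nat) (e : rel 'I_n)
  (e_sym : symmetric e) (e_irr : irreflexive e)
  (hiso : no_isolated e) (hm : (1 <= num_edges e)%N) :
  (forall d : 'I_n -> 'I_n -> R, optimal_complete e d <-> optimal_sparse e d) /\
  (forall d : 'I_n -> 'I_n -> R, optimal_sparse e d ->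
     feasible_complete d /\ pseudo_metric d /\ (forall i j, 0 <= d i j <= 1)) /\
  (forall d1 d2 : 'I_n -> 'I_n -> R, optimal_complete e d1 -> optimal_sparse e d2 ->
     obj_complete e d1 = obj_sparse e d2).
Proof.
have oeq := @obj_eq R n e e_sym e_irr hm.
have osfc : forall d : 'I_n -> 'I_n -> R, optimal_sparse e d -> feasible_complete d.
  move=> d [hfs hopt].
  have [D [hfc [hE hle]]] := @closure_exists R n e e_sym _ hfs.
  have [_ heq] := @obj_mono R n e hiso hm _ _ hE hle.
  have H := heq (hopt D (@fc_fs R n e _ hfc)).
  suff <- : D = d by [].
  apply: functional_extensionality => i; apply: functional_extensionality => j.
  by case: (boolP (e i j)) => h; [apply: hE | apply: H].
have part1 : forall d : 'I_n -> 'I_n -> R, optimal_complete e d <-> optimal_sparse e d.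
  move=> d; split.
  - move=> [hfc hopt]; split; first exact: (@fc_fs R n e).
    move=> d' hfs'.
    have [D' [hfc' [hE' hle']]] := @closure_exists R n e e_sym _ hfs'.
    have [hmono _] := @obj_mono R n e hiso hm _ _ hE' hle'.
    apply: le_trans hmono _; rewrite -!oeq; exact: hopt.
  - move=> hos; split; first exact: osfc.
    move=> d' hfc'; rewrite !oeq; apply: hos.2; exact: (@fc_fs R n e).
split=> //; split.
  move=> d hos; have hfc := osfc d hos; split=> //; exact: (@fc_pm R n).
move=> d1 d2 h1 h2; rewrite oeq; apply/eqP; rewrite eq_le.
have h1' := (part1 d1).1 h1.
apply/andP; split; [apply: h2.2; exact: h1'.1 | apply: h1'.2; exact: h2.1].
Qed.
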